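(* Let $\mathcal{G}$ be a connected hypergraph with spectral radius $\rho$ and principal eigenvector $X=(x_v)$. Let $k\ge 3$ and let $e_0,e_1,e_2$ be edges of $\mathcal{G}$ with $e_0=\{v_1,v_2,\dots,v_{k-1},v_k\}$, such that $\deg_{\mathcal{G}}(v_2)=\cdots=\deg_{\mathcal{G}}(v_{k-1})=1$, $e_1\cap e_0=\{v_1\}$ and $e_2\cap e_0=\{v_k\}$. Then $$x_{v_2}=x_{v_3}=\cdots=x_{v_{k-1}}=\frac{x_{v_1}+x_{v_k}}{(k-1)\rho-(k-3)}<\min\{x_{v_1},x_{v_k}\}.$$
   Context: A hypergraph has a finite vertex set and distinct edges (subsets with at least two vertices); $\deg_{\mathcal{G}}(v)$ is the number of edges containing $v$. The adjacency matrix has $(\mathcal{A}_{\mathcal{G}})_{ij}=\sum_{e\ni i,j}\frac{1}{|e|-1}$ for $i\ne j$ and $0$ on the diagonal; $\rho$ is its spectral radius. For connected $\mathcal{G}$ the principal eigenvector is the unique positive eigenvector $X$ of $\mathcal{A}_{\mathcal{G}}$ for $\rho$ with $\sum_v x_v^2=1$. *)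

(* Defs.v *)
From mathcomp Require Import all_boot all_order all_algebra.
Set Implicit Arguments. Unset Strict Implicit. Unset Printing Implicit Defensive.
Import Order.TTheory GRing.Theory Num.Theory.
Local Open Scope ring_scope.

Definition is_hypergraph (n : nat) (E : {set {set 'I_n}}) : Prop :=
  forall e, e \in E -> (2 <= #|e|)%N.

Definition hdeg (n : nat) (E : {set {set 'I_n}}) (v : 'I_n) : nat :=
  #|[set e in E | v \in e]|.

Definition hadj (n : nat) (E : {set {set 'I_n}}) : rel 'I_n :=
  fun u v => [exists e in E, (u \in e) && (v \in e)].

Definition hconnected (n : nat) (E : {set {set 'I_n}}) : Prop :=
  forall u v : 'I_n, connect (hadj E) u v.

Definition hadjmx (R : numFieldType) (n : nat) (E : {set {set 'I_n}}) : 'M[R]_n :=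
  \matrix_(i, j) (if i == j then 0
                  else \sum_(e in E | (i \in e) && (j \in e)) ((#|e|.-1)%:R)^-1).

Definition is_spectral_radius (R : realFieldType) (n : nat) (A : 'M[R]_n) (rho : R) : Prop :=
  eigenvalue A rho /\ (forall a : R, eigenvalue A a -> `|a| <= rho).

Definition is_principal_eigenvector (R : realFieldType) (n : nat) (A : 'M[R]_n)
    (rho : R) (X : 'cV[R]_n) : Prop :=
  [/\ forall i, 0 < X i 0, A *m X = rho *: X & \sum_i X i 0 ^+ 2 = 1].

(* Main.v *)
Require Import Defs.
From mathcomp Require Import all_boot all_order all_algebra.
From mathcomp Require Import lra.
Import Order.TTheory GRing.Theory Num.Theory.
Local Open Scope ring_scope.

Lemma rowsum (R : realFieldType) (n : nat) (E : {set {set 'I_n}}) (X : 'cV[R]_n) u :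
  (hadjmx R E *m X) u 0 =
  \sum_(e in E | u \in e) (\sum_(j in e | j != u) X j 0) / (#|e|.-1)%:R.
Proof.
rewrite mxE.
under eq_bigr do rewrite mxE.
rewrite big_mkcond /=.
under [RHS]eq_bigr do rewrite mulr_suml big_mkcond /=.
rewrite exchange_big /=; apply: eq_bigr => j _.
case: (eqVneq u j) => [<-|unj].
  rewrite mul0r; symmetry; apply: big1 => e _; by rewrite /= andbF.
rewrite mulr_suml [LHS]big_mkcond [RHS]big_mkcond /=.
apply: eq_bigr => e _.
by case: (e \in E); case: (u \in e); case: (j \in e); rewrite /= ?mul0r // mulrC.
Qed.

Lemma sum_pos (n : nat) (R : realFieldType) (F : 'I_n -> R) (e : {set 'I_n}) u :
  (forall j, 0 < F j) -> (2 <= #|e|)%N -> u \in e ->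
  0 < \sum_(j in e | j != u) F j.
Proof.
move=> Fp he ue.
have : (0 < #|e :\ u|)%N by move: he; rewrite (cardsD1 u e) ue.
case/card_gt0P => j; rewrite !inE => /andP [ju je].
rewrite (bigD1 j) /=; last by rewrite je ju.
by apply: ltr_pwDl => //; apply: sumr_ge0 => i _; exact/ltW.
Qed.

Theorem lemma3p6 (R : realFieldType) (n : nat) (E : {set {set 'I_n}})
    (rho : R) (X : 'cV[R]_n) (k : nat) (v : nat -> 'I_n)
    (e0 e1 e2 : {set 'I_n}) :
  is_hypergraph E ->
  hconnected E ->
  is_spectral_radius (hadjmx R E) rho ->
  is_principal_eigenvector (hadjmx R E) rho X ->
  (3 <= k)%N ->
  e0 \in E -> e1 \in E -> e2 \in E ->
  (* e0 = {v_1, ..., v_k} with the v_i distinct *)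
  {in [pred i : nat | (1 <= i <= k)%N] &, injective v} ->
  (forall x, x \in e0 <-> exists2 i, (1 <= i <= k)%N & x = v i) ->
  (forall i, (2 <= i <= k.-1)%N -> hdeg E (v i) = 1%N) ->
  e1 :&: e0 = [set v 1%N] ->
  e2 :&: e0 = [set v k] ->
  forall i, (2 <= i <= k.-1)%N ->
    X (v i) 0 = (X (v 1%N) 0 + X (v k) 0) / ((k.-1)%:R * rho - (k - 3)%:R)
    /\ X (v i) 0 < Num.min (X (v 1%N) 0) (X (v k) 0).
Proof.
move=> HG _ _ [Xp HAX _] hk e0E e1E e2E vinj He0 hdeg1 H1 H2 i hi.
have eig u : rho * X u 0 =
    \sum_(e in E | u \in e) (\sum_(j in e | j != u) X j 0) / (#|e|.-1)%:R.
  by rewrite -rowsum HAX mxE.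
have [m km] : exists m, k = m.+3 by exists (k - 3)%N; rewrite -addn3 subnK.
subst k.
have -> : (m.+3 - 3 = m)%N by rewrite -addn3 addnK.
rewrite /= in hi hdeg1 *.
pose w : 'I_m.+3 -> 'I_n := fun a => v (nat_of_ord a).+1.
have winj : {in setT &, injective w}.
  move=> a b _ _ h; apply/val_inj/eq_add_S; apply: vinj h; rewrite inE /= ?ltn_ord //.
have e0eq : e0 = w @: setT.
  apply/setP => x; apply/idP/imsetP.
    move/He0 => [j /andP [j1 jk] ->].
    have jl : (j.-1 < m.+3)%N by rewrite prednK.
    by exists (Ordinal jl); rewrite ?inE // /w /= prednK.
  by case=> a _ ->; apply/He0; exists (nat_of_ord a).+1 => //; exact: ltn_ord.
have card0 : #|e0| = m.+3 by rewrite e0eq card_in_imset // cardsT card_ord.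
set S := \sum_(j in e0) X j 0.
have Sdec : S = X (v 1%N) 0 + X (v m.+3) 0 + \sum_(a < m.+1) X (v a.+2) 0.
  rewrite /S e0eq big_imset // (eq_bigl xpredT); last by move=> a; rewrite inE.
  rewrite big_ord_recl big_ord_recr /= /w /= /bump /=.
  by rewrite -!addrA; congr (_ + _); rewrite addrC.
set M2 : R := (m.+2)%:R.
have M2p : 0 < M2 by rewrite ltr0n.
have Sdel u : u \in e0 -> \sum_(j in e0 | j != u) X j 0 = S - X u 0.
  by move=> ue; rewrite /S [in RHS](bigD1 u) //= addrC addrK.
have mid j : (2 <= j <= m.+2)%N ->
    rho * M2 * X (v j) 0 = S - X (v j) 0 /\ 0 < S - X (v j) 0.
  move=> hj.
  have vje : v j \in e0 by apply/He0; exists j => //; move: hj => /andP [h1 h2];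
    apply/andP; split; [exact: leq_trans h1 | exact: leq_trans h2 _].
  have pos : 0 < S - X (v j) 0 by rewrite -Sdel //; apply: sum_pos => //; exact: HG.
  split => //.
  have : #|[set e in E | v j \in e]| == 1%N by apply/eqP; exact: hdeg1.
  case/cards1P => e' he'.
  have ee : e' = e0.
    by apply/eqP; rewrite eq_sym -in_set1 -he' inE e0E vje.
  subst e'.
  have := eig (v j).
  rewrite (eq_bigl (fun e => e \in [set e0])); last first.
    by move=> e; rewrite -he' inE.
  rewrite big_set1 card0 Sdel //= => eq.
  by rewrite mulrAC eq -/M2 divfK // gt_eqF.
set r := rho * M2.
set y := X (v i) 0.
have [ri posi] := mid i hi.
have rp : 0 < r by move: posi; rewrite -ri pmulr_lgt0.
have r1 j : (2 <= j <= m.+2)%N -> (r + 1) * X (v j) 0 = S.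
  by move=> hj; have [rj _] := mid j hj; rewrite mulrDl mul1r rj subrK.
have yall j : (2 <= j <= m.+2)%N -> X (v j) 0 = y.
  move=> hj; apply: (mulfI (x := r + 1)); first by rewrite gt_eqF // ltr_wpDr.
  by rewrite r1 // r1.
have Sy : S = X (v 1%N) 0 + X (v m.+3) 0 + (m.+1)%:R * y.
  rewrite Sdec mulr_natl (eq_bigr (fun _ => y)) ?sumr_const ?card_ord //.
  move=> a _; apply: yall; apply/andP; split=> //; rewrite ltnS; exact: ltn_ord.
have ry : (r + 1) * y = S by exact: r1.
have mS : (m.+1)%:R = m%:R + 1 :> R by rewrite natr1.
set x1 := X (v 1%N) 0.
set xk := X (v m.+3) 0.
have x1p : 0 < x1 by exact: Xp.
have xkp : 0 < xk by exact: Xp.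
have yp : 0 < y by exact: Xp.
have Dy : (r - m%:R) * y = x1 + xk.
  rewrite mulrBl; move: ry; rewrite Sy mS !mulrDl !mul1r.
  rewrite /x1 /xk; move: (r * y) (m%:R * y) => a b; lra.
have Dp : 0 < r - m%:R.
  have h : 0 < x1 + xk by lra.
  by move: h; rewrite -Dy pmulr_lgt0.
have side u e' : u \in e0 -> e' \in E -> e' :&: e0 = [set u] ->
    S - X u 0 < r * X u 0.
  move=> ue e'E He'.
  have ue' : u \in e' by have := set11 u; rewrite -He' inE => /andP [].
  have ne : e' != e0.
    apply/eqP => ee; move: He'; rewrite ee setIid => h.
    by move: card0; rewrite h cards1.
  rewrite /r mulrAC -ltr_pdivrMr // eig (bigD1 e0) /=; last by rewrite e0E ue.
  rewrite (bigD1 e') /=; last by rewrite e'E ue' ne.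
  rewrite card0 Sdel // ltrDl; apply: ltr_pwDl.
    apply: divr_gt0; first by apply: sum_pos => //; exact: HG.
    by rewrite ltr0n; case: #|e'| (HG _ e'E) => [|[|c]].
  apply: sumr_ge0 => e _; apply: divr_ge0; last exact: ler0n.
  by apply: sumr_ge0 => j _; exact: ltW.
have v1e : v 1%N \in e0 by apply/He0; exists 1%N.
have vke : v m.+3 \in e0 by apply/He0; exists m.+3; rewrite ?leqnn.
have s1 := side _ _ v1e e1E H1.
have s2 := side _ _ vke e2E H2.
rewrite -/x1 -/xk in s1 s2.
have eqS : S = x1 + xk + (m.+1)%:R * y by exact: Sy.
split.
  by rewrite [M2 * rho]mulrC -/r -Dy [(r - _) * y]mulrC mulfK // gt_eqF.
have ry' : r * y + y = x1 + xk + (m.+1)%:R * y by rewrite -eqS -ry mulrDl mul1r.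
rewrite eqS in s1 s2.
have : y < x1.
  move: (m.+1)%:R s1 ry' => c; rewrite -/y => ? ?; nra.
have : y < xk.
  move: (m.+1)%:R s2 ry' => c; rewrite -/y => ? ?; nra.
by rewrite lt_min => -> ->.
Qed.
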